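(* Fix $K>0$ and $z\in\mathbb{C}$, and assume $b_n\ge m\ge m_0$ for a sufficiently large constant $m_0$. For all sufficiently large $n$ (depending on $K$) the following holds on the event $\mathcal{E}_K$: for every unit vector $v\in\mathbb{C}^n$ with $\|X_z v\|\le b_n^{-10m}m^{-1/2}$, and for every $i\in[m-1]$, either $\|v_{[i]}\|\ge b_n^{-10m}m^{-1/2}$ or $\|v_{[i+1]}\|\ge b_n^{-10m}m^{-1/2}$.
   Context: Let $b_n$ divide $n$, $m=n/b_n$, $c_n=3b_n$. Let $\tilde D_i,\tilde U_i,\tilde T_i$ ($i\in[m]$) be $b_n\times b_n$ matrices, $D_i=\tilde D_i/\sqrt{c_n}$, $U_i=\tilde U_i/\sqrt{c_n}$, $T_i=\tilde T_i/\sqrt{c_n}$, $(D_i)_z=D_i-zI_{b_n}$. Let $X$ be the $n\times n$ block matrix ($m\times m$ blocks of size $b_n$, block indices modulo $m$) with $(i,i)$ block $D_i$, $(i,i-1)$ block $T_{i-1}$, $(i,i+1)$ block $U_{i+1}$, other blocks zero, and $X_z=X-zI$. $\mathcal{E}_K$ is the event that for all $i\in[m]$: $\|U_i\|,\|(D_i)_z\|,\|T_i\|\le K$ and the smallest singular values satisfy $s_{b_n}(U_i),s_{b_n}(T_i)\ge b_n^{-5}$. For $v\in\mathbb{C}^n$, $v_{[1]},\dots,v_{[m]}\in\mathbb{C}^{b_n}$ are the consecutive blocks of $b_n$ coordinates of $v$. *)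

(* Defs.v *)
From HB Require Import structures.
From mathcomp Require Import all_boot all_order all_algebra.
From mathcomp Require Import classical_sets reals.
From mathcomp Require Import complex.
Set Implicit Arguments. Unset Strict Implicit. Unset Printing Implicit Defensive.
Import Order.TTheory GRing.Theory Num.Theory.
Local Open Scope ring_scope.
Local Open Scope classical_set_scope.

Section Defs.
Variable R : realType.
Local Notation C := R[i].

Definition cabs2 (x : C) : R := (complex.Re x) ^+ 2 + (complex.Im x) ^+ 2.

Definition vnorm k (v : 'cV[C]_k) : R := Num.sqrt (\sum_(r < k) cabs2 (v r 0)).

Definition opnorm k (A : 'M[C]_k) : R :=
  sup [set vnorm (A *m x) | x in [set x : 'cV[C]_k | vnorm x = 1]].

Definition smin k (A : 'M[C]_k) : R :=
  inf [set vnorm (A *m x) | x in [set x : 'cV[C]_k | vnorm x = 1]].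

(* entry (p,q) of a b x b matrix, for p, q < b (0 if b = 0) *)
Definition bentry b (A : 'M[C]_b) (p q : nat) : C :=
  match b return 'M[C]_b -> C with
  | 0 => fun _ => 0
  | b'.+1 => fun A => A (inord p) (inord q)
  end A.

(* The n x n block matrix X, n = b * m, blocks of size b, block indices
   0..m-1 (0-based version of [m]) taken modulo m:
   block (i,i) = D i, block (i,i-1) = T (i-1), block (i,i+1) = U (i+1). *)
Definition Xmat (b m n : nat) (D T U : nat -> 'M[C]_b) : 'M[C]_n :=
  \matrix_(r < n, c < n)
    let i := (r %/ b)%N in let j := (c %/ b)%N in
    let p := (r %% b)%N in let q := (c %% b)%N in
    (if j == i then bentry (D j) p q else 0)
    + (if j == ((i + m - 1) %% m)%N then bentry (T j) p q else 0)
    + (if j == ((i + 1) %% m)%N then bentry (U j) p q else 0).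

Definition event_EK (b m : nat) (K : R) (z : C) (D T U : nat -> 'M[C]_b) : Prop :=
  forall i, (i < m)%N ->
    [/\ opnorm (U i) <= K, opnorm (D i - z%:M) <= K, opnorm (T i) <= K,
        smin (U i) >= (b%:R) ^- 5 & smin (T i) >= (b%:R) ^- 5].

Definition blocknorm (b n : nat) (v : 'cV[C]_n) (i : nat) : R :=
  Num.sqrt (\sum_(r < n | (r %/ b)%N == i) cabs2 (v r 0)).

End Defs.

(* Main.v *)
Require Import Defs.
From HB Require Import structures.
From mathcomp Require Import all_boot all_order all_algebra.
From mathcomp Require Import classical_sets reals.
From mathcomp Require Import complex.
From mathcomp Require Import ring lra zify.
Set Implicit Arguments. Unset Strict Implicit. Unset Printing Implicit Defensive.
Import Order.TTheory GRing.Theory Num.Theory.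
Local Open Scope ring_scope.

Section H.
Variable R : realType.
Local Notation C := R[i].

Lemma cabs2_ge0 (x : C) : 0 <= cabs2 x.
Proof. rewrite /cabs2; apply: addr_ge0; exact: sqr_ge0. Qed.

Lemma cabs2M (x y : C) : cabs2 (x * y) = cabs2 x * cabs2 y.
Proof. case: x => a b; case: y => c d; rewrite /cabs2 /=. ring. Qed.

Lemma sq3 (x y z : R) : (x - y - z) ^+ 2 <= 3 * (x ^+ 2 + y ^+ 2 + z ^+ 2).
Proof.
have e : 3 * (x ^+ 2 + y ^+ 2 + z ^+ 2) - (x - y - z) ^+ 2 = (x + y) ^+ 2 + (x + z) ^+ 2 + (y - z) ^+ 2 by ring.
rewrite -subr_ge0 e; apply: addr_ge0; [apply: addr_ge0|]; exact: sqr_ge0. Qed.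

Lemma cabs2_sub3 (a b c d : C) : a = b + c + d ->
  cabs2 d <= 3 * (cabs2 a + cabs2 b + cabs2 c).
Proof. case: a => a1 a2; case: b => b1 b2; case: c => c1 c2; case: d => d1 d2.
case=> h1 h2; rewrite /cabs2 /=.
have -> : d1 = a1 - b1 - c1 by lra. have -> : d2 = a2 - b2 - c2 by lra.
have := sq3 a1 b1 c1; have := sq3 a2 b2 c2. lra. Qed.

Lemma cabs2D2 (x y : C) : cabs2 (x + y) <= 2 * cabs2 x + 2 * cabs2 y.
Proof. case: x => a b; case: y => c d; rewrite /cabs2 /=.
have e : 2 * (a ^+ 2 + b ^+ 2) + 2 * (c ^+ 2 + d ^+ 2) - ((a + c) ^+ 2 + (b + d) ^+ 2) = (a - c) ^+ 2 + (b - d) ^+ 2 by ring.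
rewrite -subr_ge0 e; apply: addr_ge0; exact: sqr_ge0. Qed.

Lemma cabs2_eq0 (x : C) : cabs2 x = 0 -> x = 0.
Proof. case: x => a b; rewrite /cabs2 /= => h.
have ha : a = 0 by nra. have hb : b = 0 by nra. by rewrite ha hb. Qed.

Lemma cabs2R (c : R) : cabs2 (c%:C)%C = c ^+ 2.
Proof. rewrite /cabs2 /=. ring. Qed.

Lemma realCM (a c : R) : (a%:C * c%:C = (a * c)%:C)%C.
Proof. rewrite /=. apply/eqP; rewrite eq_complex /=; apply/andP; split; apply/eqP; ring. Qed.

Lemma div_blockE (i b j : nat) : (0 < b)%N ->
  ((j * b <= i < j.+1 * b) = (i %/ b == j))%N.
Proof. move=> b0; rewrite eqn_leq leq_divRL // -(ltn_divLR i j.+1 b0) ltnS; exact: andbC. Qed.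

Lemma sum_block (V : nmodType) (n b j : nat) (g : nat -> V) : (0 < b)%N ->
  (j.+1 * b <= n)%N ->
  \sum_(r < n | (r %/ b)%N == j) g r = \sum_(q < b) g (j * b + q)%N.
Proof.
move=> b0 hn.
have h1 : (j * b <= j.+1 * b)%N by rewrite leq_mul2r leqnSn orbT.
rewrite -(big_mkord (fun r => (r %/ b)%N == j) g).
rewrite (big_cat_nat (leq0n (j * b)) (leq_trans h1 hn)) /=.
rewrite (big_cat_nat h1 hn) /=.
rewrite [X in X + _]big1_seq ?add0r; last first.
  move=> i /andP[hi]; rewrite mem_index_iota => /andP[_ hi2].
  by move: hi; rewrite -div_blockE // leqNgt hi2.
rewrite [X in _ + X]big1_seq ?addr0; last first.
  move=> i /andP[hi]; rewrite mem_index_iota => /andP[hi2 _].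
  by move: hi; rewrite -div_blockE // ltnNge hi2 andbF.
rewrite big_nat_cond.
rewrite (eq_bigl (fun i => (j * b <= i < j.+1 * b)%N && true)); last first.
  by move=> i /=; rewrite -div_blockE // andbb andbT.
rewrite -big_nat_cond -{1}(add0n (j * b)%N) big_addn mulSn addnK big_mkord; apply: eq_bigr => i _; by rewrite addnC.
Qed.

Lemma sum_block_cond (V : nmodType) (n b j : nat) (g : nat -> V) : (0 < b)%N ->
  (j.+1 * b <= n)%N ->
  \sum_(r < n) (if (r %/ b)%N == j then g r else 0) = \sum_(q < b) g (j * b + q)%N.
Proof. by move=> b0 hn; rewrite -big_mkcond sum_block. Qed.

Lemma test (j b q : nat) : (0 < b)%N -> (q < b)%N -> ((j * b + q) %/ b = j /\ (j*b+q) %% b = q)%N.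
Proof. move=> b0 qb; by rewrite divnMDl // divn_small // addn0 modnMDl modn_small. Qed.

Definition ent k (y : 'cV[C]_k) (p : nat) : C :=
  match k return 'cV[C]_k -> C with 0 => fun _ => 0 | k'.+1 => fun y => y (inord p) 0 end y.

Lemma entE k (y : 'cV[C]_k) (p : 'I_k) : ent y p = y p 0.
Proof. case: k y p => [|k] y p; first by case: p. by rewrite /= inord_val. Qed.

Lemma bentryE k (A : 'M[C]_k) (p q : 'I_k) : bentry A p q = A p q.
Proof. case: k A p q => [|k] A p q; first by case: p. by rewrite /= !inord_val. Qed.

Definition blk b n (v : 'cV[C]_n) (j : nat) : 'cV[C]_b := \col_(q < b) ent v (j * b + q)%N.

Lemma sum_cabs2_ge0 (I : finType) (P : pred I) (F : I -> C) : 0 <= \sum_(i | P i) cabs2 (F i).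
Proof. by apply: sumr_ge0 => i _; exact: cabs2_ge0. Qed.

Lemma vnorm_ge0 k (y : 'cV[C]_k) : 0 <= vnorm y.
Proof. exact: sqrtr_ge0. Qed.

Lemma vnorm_sq k (y : 'cV[C]_k) : vnorm y ^+ 2 = \sum_(q < k) cabs2 (y q 0).
Proof. by rewrite /vnorm sqr_sqrtr // sum_cabs2_ge0. Qed.

Lemma blocknorm_sq b n (v : 'cV[C]_n) j : (0 < b)%N -> (j.+1 * b <= n)%N ->
  blocknorm b v j ^+ 2 = vnorm (blk b v j) ^+ 2.
Proof.
move=> b0 hn; rewrite vnorm_sq /blocknorm sqr_sqrtr ?sum_cabs2_ge0 //.
rewrite (eq_bigr (fun r : 'I_n => cabs2 (ent v r))); last by move=> r _; rewrite entE.
rewrite (sum_block (fun r => cabs2 (ent v r))) //.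
by apply: eq_bigr => q _; rewrite mxE.
Qed.

Lemma blocknorm_ge0 b n (v : 'cV[C]_n) j : 0 <= blocknorm b v j.
Proof. exact: sqrtr_ge0. Qed.

Lemma blocknorm_le b n (v : 'cV[C]_n) j : blocknorm b v j ^+ 2 <= vnorm v ^+ 2.
Proof.
rewrite vnorm_sq /blocknorm sqr_sqrtr ?sum_cabs2_ge0 // big_mkcond /=.
apply: ler_sum => r _; case: ifP => _ //; exact: cabs2_ge0.
Qed.

Lemma vnorm_blocks b m n (v : 'cV[C]_n) : (0 < b)%N -> n = (m * b)%N ->
  vnorm v ^+ 2 = \sum_(j < m) blocknorm b v j ^+ 2.
Proof.
move=> b0 hn; rewrite vnorm_sq.
have hp : forall r : 'I_n, (r %/ b < m)%N.
  by move=> r; rewrite ltn_divLR // -hn.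
rewrite (partition_big (fun r : 'I_n => Ordinal (hp r)) xpredT) //=.
apply: eq_bigr => j _; rewrite /blocknorm sqr_sqrtr ?sum_cabs2_ge0 //.
Qed.

Lemma vnorm_scale k (c : C) (y : 'cV[C]_k) : vnorm (c *: y) = Num.sqrt (cabs2 c) * vnorm y.
Proof.
rewrite /vnorm -sqrtrM ?cabs2_ge0 // mulr_sumr; congr Num.sqrt.
by apply: eq_bigr => q _; rewrite mxE cabs2M.
Qed.

Lemma vnorm_eq0 k (y : 'cV[C]_k) : vnorm y = 0 -> y = 0.
Proof.
move=> h; have : vnorm y ^+ 2 = 0 by rewrite h expr0n.
rewrite vnorm_sq => /psumr_eq0P h2.
apply/matrixP => p q; rewrite ord1 mxE; apply: cabs2_eq0; apply: h2 => //.
move=> i _; exact: cabs2_ge0.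
Qed.

Lemma vnorm0 k : vnorm (0 : 'cV[C]_k) = 0.
Proof.
rewrite /vnorm big1 ?sqrtr0 // => q _; rewrite mxE /cabs2 /=. by rewrite expr0n addr0.
Qed.

Lemma normalize k (x : 'cV[C]_k) : vnorm x != 0 ->
  exists u : 'cV[C]_k, vnorm u = 1 /\ forall A : 'M[C]_k, vnorm (A *m x) = vnorm x * vnorm (A *m u).
Proof.
move=> nx0; have nxp : 0 < vnorm x by rewrite lt_def nx0 vnorm_ge0.
exists (((vnorm x)^-1)%:C%C *: x); split.
  rewrite vnorm_scale cabs2R sqrtr_sqr ger0_norm ?invr_ge0 ?vnorm_ge0 //.
  by rewrite mulVf.
move=> A; rewrite -scalemxAr vnorm_scale cabs2R sqrtr_sqr ger0_norm ?invr_ge0 ?vnorm_ge0 //.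
by rewrite mulrA mulfV // mul1r.
Qed.


Lemma cabs2_sum k (F : 'I_k -> C) : cabs2 (\sum_i F i) <= 2 ^+ k * \sum_i cabs2 (F i).
Proof.
elim: k F => [|k IH] F.
  by rewrite !big_ord0 /cabs2 /= expr0n addr0 mulr0.
rewrite !big_ord_recr.
have d := cabs2D2 (\sum_(i < k) F (widen_ord (leqnSn k) i)) (F ord_max).
have h := IH (fun i => F (widen_ord (leqnSn k) i)).
have s0 := sum_cabs2_ge0 xpredT (fun i : 'I_k => F (widen_ord (leqnSn k) i)).
have c0 := cabs2_ge0 (F ord_max).
have p1 : 1 <= 2 ^+ k :> R by rewrite exprn_ege1 // ler1n.
rewrite exprS.
move: d h s0 c0 p1.
set P := (2 ^+ k : R); set T := \sum_(i < k) cabs2 _; set S := cabs2 (\sum_(i < k) _).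
set c := cabs2 (F ord_max); set L := cabs2 _.
move=> d h s0 c0 p1. change (L <= 2 * P * (T + c)); nra.
Qed.

Lemma entry_le1 k (x : 'cV[C]_k) q : vnorm x = 1 -> cabs2 (x q 0) <= 1.
Proof.
move=> h; have : vnorm x ^+ 2 = 1 by rewrite h expr1n.
rewrite vnorm_sq (bigD1 q) //= => <-.
by rewrite lerDl sum_cabs2_ge0.
Qed.

Definition imS k (A : 'M[C]_k) := [set vnorm (A *m x) | x in [set x : 'cV[C]_k | vnorm x = 1]]%classic.

Lemma imS_ub k (A : 'M[C]_k) : has_ubound (imS A).
Proof.
exists (Num.sqrt (\sum_(p < k) 2 ^+ k * \sum_(q < k) cabs2 (A p q))).
move=> y [x /= hx <-]; rewrite /vnorm ler_sqrt; last first.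
  apply: sumr_ge0 => p _; apply: mulr_ge0; [exact: exprn_ge0|exact: sum_cabs2_ge0].
apply: ler_sum => p _; rewrite mxE.
apply: le_trans (cabs2_sum _) _; apply: ler_wpM2l; first exact: exprn_ge0.
apply: ler_sum => q _; rewrite cabs2M -{2}(mulr1 (cabs2 (A p q))).
by apply: ler_wpM2l; [exact: cabs2_ge0| exact: entry_le1].
Qed.

Lemma opnorm_le k (A : 'M[C]_k) x : vnorm (A *m x) <= opnorm A * vnorm x.
Proof.
have [h0|h0] := eqVneq (vnorm x) 0.
  by rewrite h0 (vnorm_eq0 h0) mulmx0 vnorm0 mulr0.
have [u [hu ->]] := normalize h0.
rewrite [X in _ <= X]mulrC; apply: ler_wpM2l; first exact: vnorm_ge0.
by apply: ub_le_sup; [exact: imS_ub| exists u].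
Qed.

Lemma smin_le k (A : 'M[C]_k) x : smin A * vnorm x <= vnorm (A *m x).
Proof.
have [h0|h0] := eqVneq (vnorm x) 0.
  by rewrite h0 mulr0 vnorm_ge0.
have [u [hu ->]] := normalize h0.
rewrite [X in X <= _]mulrC; apply: ler_wpM2l; first exact: vnorm_ge0.
apply: ge_inf; last by exists u.
by exists 0 => y [z _ <-]; exact: vnorm_ge0.
Qed.


Lemma ent_lt k (y : 'cV[C]_k) p (hp : (p < k)%N) : ent y p = y (Ordinal hp) 0.
Proof. exact: (entE y (Ordinal hp)). Qed.

Lemma bentry_lt k (A : 'M[C]_k) p q (hp : (p < k)%N) (hq : (q < k)%N) :
  bentry A p q = A (Ordinal hp) (Ordinal hq).
Proof. exact: (bentryE A (Ordinal hp) (Ordinal hq)). Qed.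

Lemma blk_part b n (M : 'M[C]_b) (v : 'cV[C]_n) j q : (q < b)%N -> (0 < b)%N ->
  (j.+1 * b <= n)%N ->
  \sum_(c < n) (if (c %/ b)%N == j then bentry M q (c %% b)%N * ent v c else 0)
  = ent (M *m blk b v j) q.
Proof.
move=> hq b0 hn.
rewrite (sum_block_cond (fun c => bentry M q (c %% b)%N * ent v c)) //.
rewrite (ent_lt _ hq) mxE; apply: eq_bigr => q' _.
rewrite mxE modnMDl modn_small // (bentry_lt M hq (ltn_ord q')).
by congr (M _ _ * _); apply: val_inj.
Qed.

Lemma ent_Bz k (M : 'M[C]_k) (y : 'cV[C]_k) (z : C) q : (q < k)%N ->
  ent ((M - z%:M) *m y) q = ent (M *m y) q - z * ent y q.
Proof.
move=> hq; rewrite !(ent_lt _ hq) mulmxBl mul_scalar_mx.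
by rewrite !mxE.
Qed.

Lemma ent_blk b n (v : 'cV[C]_n) j q : (q < b)%N -> ent (blk b v j) q = ent v (j * b + q)%N.
Proof. by move=> hq; rewrite (ent_lt _ hq) mxE. Qed.

Lemma if_sel b (M : nat -> 'M[C]_b) (j cj p qq : nat) (x : C) :
  (if cj == j then bentry (M cj) p qq else 0) * x = if cj == j then bentry (M j) p qq * x else 0.
Proof. by case: eqP => [->|]; rewrite ?mul0r. Qed.

Lemma row_id b m n (D T U : nat -> 'M[C]_b) (z : C) (v : 'cV[C]_n) k q :
  (0 < b)%N -> n = (m * b)%N -> (1 <= k)%N -> (k.+2 <= m)%N -> (q < b)%N ->
  ent ((Xmat m n D T U - z%:M) *m v) (k * b + q)%N =
    ent (T k.-1 *m blk b v k.-1) q + ent ((D k - z%:M) *m blk b v k) q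
    + ent (U k.+1 *m blk b v k.+1) q.
Proof.
move=> b0 hn k1 km hq.
have hr : (k * b + q < n)%N.
  rewrite hn; apply: leq_trans (_ : k.+1 * b <= m * b)%N.
    by rewrite mulSnr ltn_add2l.
  by rewrite leq_mul2r ltnW ?orbT.
have hkm1 : ((k + m - 1) %% m)%N = k.-1.
  have -> : (k + m - 1 = k.-1 + m)%N by lia.
  rewrite modnDr modn_small //.
  by apply: leq_ltn_trans (leq_pred k) _; apply: leq_trans km.
have hkp1 : ((k + 1) %% m)%N = k.+1 by rewrite addn1 modn_small.
have bk : forall j, (j <= k.+1)%N -> (j.+1 * b <= n)%N.
  by move=> j hj; rewrite hn leq_mul2r (leq_trans _ km) ?orbT.
rewrite ent_Bz // (ent_Bz (D k)) // ent_blk //.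
rewrite (ent_lt _ hr) mxE.
rewrite (eq_bigr (fun c : 'I_n =>
   (if (c %/ b)%N == k then bentry (D k) q (c %% b)%N * ent v c else 0)
 + (if (c %/ b)%N == k.-1 then bentry (T k.-1) q (c %% b)%N * ent v c else 0)
 + (if (c %/ b)%N == k.+1 then bentry (U k.+1) q (c %% b)%N * ent v c else 0))); last first.
  move=> c _; rewrite mxE /= divnMDl // (divn_small hq) addn0 modnMDl (modn_small hq).
  by rewrite hkm1 hkp1 entE !mulrDl !if_sel.
rewrite !big_split /=.
have b1 := bk k.-1 (leq_trans (leq_pred k) (leqnSn k)).
have b2 := bk k (leqnSn k).
have b3 := bk k.+1 (leqnn _).
rewrite !blk_part //. ring.
Qed.


Lemma sq_le (x y : R) : 0 <= x -> x <= y -> x ^+ 2 <= y ^+ 2.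
Proof. move=> x0 xy; rewrite !expr2; apply: ler_pM => //. Qed.

Lemma combine b (t d u : 'cV[C]_b) (W : nat -> C) :
  (forall q, (q < b)%N -> W q = ent t q + ent d q + ent u q) ->
  vnorm u ^+ 2 <= 3 * (\sum_(q < b) cabs2 (W q) + vnorm t ^+ 2 + vnorm d ^+ 2).
Proof.
move=> hW; rewrite !vnorm_sq -!big_split /= mulr_sumr; apply: ler_sum => q _.
apply: cabs2_sub3; rewrite (hW q (ltn_ord q)) !entE; ring.
Qed.

Lemma blocknorm_eq b n (v : 'cV[C]_n) j : (0 < b)%N -> (j.+1 * b <= n)%N ->
  blocknorm b v j = vnorm (blk b v j).
Proof.
move=> b0 hn; have h := blocknorm_sq v b0 hn.
rewrite -(ger0_norm (blocknorm_ge0 b v j)) -(ger0_norm (vnorm_ge0 (blk b v j))).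
by rewrite -!sqrtr_sqr h.
Qed.

Lemma sumW_le b n (w : 'cV[C]_n) k e : (0 < b)%N -> (k.+1 * b <= n)%N -> vnorm w <= e ->
  \sum_(q < b) cabs2 (ent w (k * b + q)%N) <= e ^+ 2.
Proof.
move=> b0 hn we.
have -> : \sum_(q < b) cabs2 (ent w (k * b + q)%N) = blocknorm b w k ^+ 2.
  by rewrite blocknorm_sq // vnorm_sq; apply: eq_bigr => q _; rewrite mxE.
apply: le_trans (blocknorm_le b w k) _; apply: sq_le => //; exact: vnorm_ge0.
Qed.

Lemma opK b (A : 'M[C]_b) y K : opnorm A <= K -> vnorm (A *m y) ^+ 2 <= K ^+ 2 * vnorm y ^+ 2.
Proof.
move=> hA; rewrite -exprMn; apply: sq_le; first exact: vnorm_ge0.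
apply: le_trans (opnorm_le A y) _; apply: ler_wpM2r => //; exact: vnorm_ge0.
Qed.

Lemma sminK b (A : 'M[C]_b) y (s : R) : 0 <= s -> s <= smin A ->
  (s * vnorm y) ^+ 2 <= vnorm (A *m y) ^+ 2.
Proof.
move=> s0 hs; apply: sq_le; first by apply: mulr_ge0 => //; exact: vnorm_ge0.
apply: le_trans (smin_le A y); apply: ler_wpM2r => //; exact: vnorm_ge0.
Qed.

Lemma row_fwd b m n (D T U : nat -> 'M[C]_b) z (v : 'cV[C]_n) K e k :
  (0 < b)%N -> n = (m * b)%N -> (1 <= k)%N -> (k.+2 <= m)%N ->
  event_EK m K z D T U -> vnorm ((Xmat m n D T U - z%:M) *m v) <= e ->
  ((b%:R) ^- 5 * blocknorm b v k.+1) ^+ 2 <=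
   3 * (e ^+ 2 + K ^+ 2 * blocknorm b v k.-1 ^+ 2 + K ^+ 2 * blocknorm b v k ^+ 2).
Proof.
move=> b0 hn k1 km hE hw.
have bk : forall j, (j <= k.+1)%N -> (j.+1 * b <= n)%N.
  by move=> j hj; rewrite hn leq_mul2r (leq_trans _ km) ?orbT.
have b1 := bk k.-1 (leq_trans (leq_pred k) (leqnSn k)).
have b2 := bk k (leqnSn k).
have b3 := bk k.+1 (leqnn _).
have [_ hD _ hU _] := hE k.+1 km.
have [_ hD2 hT2 _ _] := hE k.-1 (leq_ltn_trans (leq_pred k) (ltnW km)).
have [_ hD3 _ _ _] := hE k (ltnW km).
rewrite !blocknorm_eq //.
apply: le_trans (sminK _ _ hU) _; first by rewrite invr_ge0 exprn_ge0.
apply: le_trans (combine (W := fun q => ent ((Xmat m n D T U - z%:M) *m v) (k * b + q)%N)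
   (t := T k.-1 *m blk b v k.-1) (d := (D k - z%:M) *m blk b v k) _) _.
  by move=> q hq; rewrite row_id.
rewrite ler_pM2l //; apply: lerD; [apply: lerD; [exact: sumW_le| exact: opK]| exact: opK].
Qed.


Lemma row_bwd b m n (D T U : nat -> 'M[C]_b) z (v : 'cV[C]_n) K e k :
  (0 < b)%N -> n = (m * b)%N -> (1 <= k)%N -> (k.+2 <= m)%N ->
  event_EK m K z D T U -> vnorm ((Xmat m n D T U - z%:M) *m v) <= e ->
  ((b%:R) ^- 5 * blocknorm b v k.-1) ^+ 2 <=
   3 * (e ^+ 2 + K ^+ 2 * blocknorm b v k ^+ 2 + K ^+ 2 * blocknorm b v k.+1 ^+ 2).
Proof.
move=> b0 hn k1 km hE hw.
have bk : forall j, (j <= k.+1)%N -> (j.+1 * b <= n)%N.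
  by move=> j hj; rewrite hn leq_mul2r (leq_trans _ km) ?orbT.
have b1 := bk k.-1 (leq_trans (leq_pred k) (leqnSn k)).
have b2 := bk k (leqnSn k).
have b3 := bk k.+1 (leqnn _).
have [hU _ _ _ _] := hE k.+1 km.
have [_ _ _ _ hT] := hE k.-1 (leq_ltn_trans (leq_pred k) (ltnW km)).
have [_ hD3 _ _ _] := hE k (ltnW km).
rewrite !blocknorm_eq //.
apply: le_trans (sminK _ _ hT) _; first by rewrite invr_ge0 exprn_ge0.
apply: le_trans (combine (W := fun q => ent ((Xmat m n D T U - z%:M) *m v) (k * b + q)%N)
   (t := (D k - z%:M) *m blk b v k) (d := U k.+1 *m blk b v k.+1) _) _.
  by move=> q hq; rewrite row_id //; ring.
rewrite ler_pM2l //; apply: lerD; [apply: lerD; [exact: sumW_le| exact: opK]| exact: opK].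
Qed.


Lemma recur (s : nat -> R) (e A K2 : R) (J : nat) :
  0 <= e -> 0 <= A -> 0 <= K2 -> 1 <= A * (1 + 2 * K2) ->
  s 0%N <= e -> s 1%N <= e ->
  (forall j, (j.+2 <= J)%N -> s j.+2 <= A * (e + K2 * s j + K2 * s j.+1)) ->
  forall j, (j <= J)%N -> s j <= e * (A * (1 + 2 * K2)) ^+ j.
Proof.
move=> e0 A0 K0 L1 s0 s1 hs.
set L := A * (1 + 2 * K2).
have Q : forall j, (j.+1 <= J)%N -> s j <= e * L ^+ j /\ s j.+1 <= e * L ^+ j.
  elim=> [|j IH] hj; first by rewrite expr0 mulr1.
  have [h1 h2] := IH (ltnW hj).
  have P1 : 1 <= L ^+ j by exact: exprn_ege1.
  have eP : e <= e * L ^+ j by rewrite -{1}(mulr1 e) ler_wpM2l.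
  have h3 := hs j hj.
  rewrite exprS; split.
    apply: le_trans h2 _; apply: ler_wpM2l => //; rewrite -{1}(mul1r (L ^+ j)); apply: ler_wpM2r => //; exact: le_trans ler01 P1.
  apply: le_trans h3 _.
  move: h1 h2 eP P1; rewrite /L.
  set P := L ^+ j; set x := s j; set y := s j.+1 => h1 h2 eP P1.
  have : K2 * x + K2 * y <= 2 * K2 * (e * P).
    have := ler_wpM2l K0 h1; have := ler_wpM2l K0 h2. lra.
  move=> hK.
  have : e + K2 * x + K2 * y <= (1 + 2 * K2) * (e * P) by lra.
  move=> hh; have -> : e * (A * (1 + 2 * K2) * P) = A * ((1 + 2 * K2) * (e * P)) by ring.
  exact: ler_wpM2l.
case=> [|j] hj; first by rewrite expr0 mulr1.
have [_ h] := Q j hj; apply: le_trans h _.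
apply: ler_wpM2l => //; apply: ler_weXn2l => //.
Qed.

Lemma unscale (B x E : R) : 0 < B -> (B ^- 5 * x) ^+ 2 <= 3 * E -> x ^+ 2 <= 3 * B ^+ 10 * E.
Proof.
move=> B0 h.
have -> : x ^+ 2 = B ^+ 10 * (B ^- 5 * x) ^+ 2.
  rewrite exprMn mulrA -exprVn -exprM -exprMn mulfV ?expr1n ?mul1r //.
  by rewrite gt_eqF.
have -> : 3 * B ^+ 10 * E = B ^+ 10 * (3 * E) by ring.
apply: ler_wpM2l => //; exact: exprn_ge0 (ltW B0).
Qed.

End H.

Unset Implicit Arguments.
Theorem proposition2p7 (R : realType) :
  exists m0 : nat,
  forall (b : nat -> nat), (forall n, (b n %| n)%N) ->
  forall (K : R) (z : R[i]), 0 < K ->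
  exists N : nat, forall n : nat, (N <= n)%N ->
    let m := (n %/ b n)%N in
    (m0 <= m)%N -> (m <= b n)%N ->
    forall D T U : nat -> 'M[R[i]]_(b n),
    event_EK m K z D T U ->
    let eps := ((b n)%:R) ^- (10 * m) / Num.sqrt (m%:R) : R in
    forall v : 'cV[R[i]]_n,
      vnorm v = 1 ->
      vnorm ((Xmat m n D T U - z%:M) *m v) <= eps ->
      forall i : nat, (i.+1 < m)%N ->
        eps <= blocknorm (b n) v i \/ eps <= blocknorm (b n) v i.+1.
Proof.
exists 1%N => b hb K z K0.
set c : R := 3 * (1 + 2 * K ^+ 2).
have c0 : 0 <= c by rewrite /c; apply: mulr_ge0 => //; apply: addr_ge0 => //; apply: mulr_ge0 => //; exact: sqr_ge0.
have [k0 hk0] : exists k0 : nat, c < k0%:R by exists (Num.bound c); exact: archi_boundP.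
exists (k0 * k0)%N => n hn m hm1 hmb D T U hE eps v hv hw i hi.
have bpos : (0 < b n)%N.
  rewrite lt0n; apply/eqP => h0; move: hm1; rewrite /m h0 divn0.
  by [].
have hnm : n = (m * b n)%N by rewrite /m divnK.
have hk : (k0 <= b n)%N.
  rewrite leqNgt; apply/negP => hlt.
  have h1 : (n < k0 * k0)%N.
    rewrite hnm; apply: leq_ltn_trans (_ : (m * b n <= b n * b n)%N) _.
      exact: leq_mul.
    exact: ltn_mul.
  by move: (leq_ltn_trans hn h1); rewrite ltnn.
set B : R := (b n)%:R.
have hB : c < B by apply: lt_le_trans hk0 _; rewrite ler_nat.
have B1 : 1 <= B by rewrite ler1n.
have B0 : 0 < B by apply: lt_le_trans B1; exact: ltr01.
case: (lerP eps (blocknorm (b n) v i)) => h1; first by left.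
case: (lerP eps (blocknorm (b n) v i.+1)) => h2; first by right.
exfalso.
have eps0 : 0 <= eps by apply: le_trans (ltW h1); exact: blocknorm_ge0.
set e := eps ^+ 2.
set A := 3 * B ^+ 10.
set K2 := K ^+ 2.
set L := A * (1 + 2 * K2).
have e0 : 0 <= e by exact: sqr_ge0.
have K20 : 0 <= K2 by exact: sqr_ge0.
have B10 : 1 <= B ^+ 10 by exact: exprn_ege1.
have A0 : 0 <= A by rewrite /A; lra.
have L1 : 1 <= L by rewrite /L; apply: mulr_ege1; rewrite /A; lra.
have s0 : blocknorm (b n) v i ^+ 2 <= e by apply: sq_le; [exact: blocknorm_ge0 | exact: ltW].
have s1 : blocknorm (b n) v i.+1 ^+ 2 <= e by apply: sq_le; [exact: blocknorm_ge0 | exact: ltW].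
have fw := @recur R (fun j => blocknorm (b n) v (i + j) ^+ 2) e A K2 (m.-1 - i) e0 A0 K20 L1.
have bw := @recur R (fun j => blocknorm (b n) v (i.+1 - j) ^+ 2) e A K2 i.+1 e0 A0 K20 L1.
have FW : forall j, (j <= m.-1 - i)%N -> blocknorm (b n) v (i + j) ^+ 2 <= e * L ^+ j.
  apply: fw; rewrite ?addn0 ?addn1 //.
  move=> j hj.
  have k2 : ((i + j).+3 <= m)%N by move: hj hi; clear; lia.
  have := @row_fwd R (b n) m n D T U z v K eps (i + j).+1 bpos hnm (ltn0Sn _) k2 hE hw.
  move/(unscale B0); rewrite /= !addnS.
  by [].
have BW : forall j, (j <= i.+1)%N -> blocknorm (b n) v (i.+1 - j) ^+ 2 <= e * L ^+ j.
  apply: bw; rewrite ?subn0 ?subSS ?subn0 //.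
  move=> j hj.
  have k1 : (1 <= i - j)%N by move: hj; clear; lia.
  have k2 : ((i - j).+2 <= m)%N by move: hj hi; clear; lia.
  have := @row_bwd R (b n) m n D T U z v K eps (i - j) bpos hnm k1 k2 hE hw.
  move/(unscale B0).
  have -> : (i.+1 - j.+2 = (i - j).-1)%N by move: hj; clear; lia.
  have -> : (i.+1 - j.+1 = (i - j))%N by move: hj; clear; lia.
  have -> : (i.+1 - j = (i - j).+1)%N by move: hj; clear; lia.
  move=> h; apply: le_trans h _; rewrite /A /K2 -/e; apply: ler_wpM2l => //; lra.
have ALL : forall k, (k < m)%N -> blocknorm (b n) v k ^+ 2 <= e * L ^+ m.
  move=> k hkm.
  have hLm : forall j, (j <= m)%N -> e * L ^+ j <= e * L ^+ m.
    by move=> j hj; apply: ler_wpM2l => //; exact: ler_weXn2l.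
  case: (leqP i k) => hik.
    have hj : (k - i <= m.-1 - i)%N by move: hik hkm; clear; lia.
    have := FW (k - i)%N hj.
    rewrite subnKC // => h; apply: le_trans h _; apply: hLm; move: hkm; clear; lia.
  have hj : (i.+1 - k <= i.+1)%N by move: hik; clear; lia.
  have := BW (i.+1 - k)%N hj.
  rewrite subKn; last by move: hik; clear; lia.
  move=> h; apply: le_trans h _; apply: hLm.
  by move: hik hi; clear; lia.
have hsum : vnorm v ^+ 2 <= e * L ^+ m * m%:R.
  rewrite (vnorm_blocks (m := m) v bpos hnm).
  apply: le_trans (_ : _ <= \sum_(k < m) (e * L ^+ m)) _.
    by apply: ler_sum => k _; exact: ALL.
  by rewrite sumr_const card_ord mulr_natr.
rewrite hv expr1n in hsum.
set P := B ^+ (10 * m).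
set S := Num.sqrt (m%:R : R).
have P0 : 0 < P by exact: exprn_gt0.
have S0 : 0 < S by rewrite sqrtr_gt0 ltr0n.
have hS : S ^+ 2 = m%:R by rewrite sqr_sqrtr // ler0n.
have he : e * m%:R = (P ^+ 2)^-1.
  rewrite /e /eps -/B -/P -/S -hS. field.
  by rewrite !gt_eqF.
have hP : P ^+ 2 = (B ^+ 20) ^+ m by rewrite -!exprM; congr (_ ^+ _); clear; lia.
have LB : L < B ^+ 20.
  have : B <= B ^+ 10 by rewrite -{1}(expr1 B); exact: ler_weXn2l.
  rewrite /L /A (_ : B ^+ 20 = B ^+ 10 * B ^+ 10); last by rewrite -exprD.
  move=> h; have : c * B ^+ 10 < B * B ^+ 10 by rewrite ltr_pM2r // exprn_gt0.
  rewrite /c /K2 => h'; nra.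
have : L ^+ m < P ^+ 2 by rewrite hP ltrXn2r ?(le_trans ler01 L1) // -lt0n.
move: hsum; rewrite mulrAC he mulrC => hsum h.
have : L ^+ m / P ^+ 2 < 1 by rewrite ltr_pdivrMr ?mul1r // exprn_gt0.
by rewrite ltNge hsum.
Qed.
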